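(* Let $k\ge1$, $G=(V,E)$ an inductively $k$-independent graph with $k$-independence ordering $v_1,\dots,v_n$, $f:2^V\to\mathbb{R}_{\ge0}$ monotone submodular with $f(\emptyset)=0$, and $\beta>0$. Run algorithm PREEMPTIVE-GREEDY (described in the context), let $S_{\mathrm{out}}$ be its output and $U$ the set of all vertices that were ever contained in $S$ during the run. Then $f(U)\le(1+\beta^{-1})f(S_{\mathrm{out}})$.
   Context: $N(v)$ is the neighbourhood of $v$ (excluding $v$); $G$ is inductively $k$-independent with $k$-independence ordering $v_1,\dots,v_n$ if for every $i$, $G[N(v_i)\cap\{v_i,\dots,v_n\}]$ has no independent set of size more than $k$. Order $V$ by $v_1<\dots<v_n$. For $S\subseteq V$: $f_S(v)=f(S\cup\{v\})-f(S)$, and $\nu_f(S,u)=f_{S'}(u)$ where $S'=\{s\in S:s<u\}$. Algorithm PREEMPTIVE-GREEDY (parameter $\beta>0$): start with $S=\emptyset$; for $i=1,\dots,n$: let $C_i=N(v_i)\cap S$; if $f_S(v_i)\ge(1+\beta)\sum_{u\in C_i}\nu_f(S,u)$, replace $S$ by $(S\setminus C_i)\cup\{v_i\}$. Return the final $S$ as $S_{\mathrm{out}}$. *)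

(* Defs.v *)
From mathcomp Require Import all_boot all_order all_algebra.
Set Implicit Arguments. Unset Strict Implicit. Unset Printing Implicit Defensive.
Import Order.TTheory GRing.Theory Num.Theory.
Local Open Scope ring_scope.

Section PG.
Variables (T : finType) (e : rel T) (ord : seq T).

Definition is_ordering : Prop := uniq ord /\ forall v : T, v \in ord.

Definition vlt (u v : T) : bool := (index u ord < index v ord)%N.

Definition simple_graph : Prop := symmetric e /\ irreflexive e.

Definition nbhd (v : T) : {set T} := [set u | e v u & u != v].

Definition independent (A : {set T}) : bool :=
  [forall x in A, forall y in A, ~~ e x y].

(* G[N(v_i) ∩ {v_i,...,v_n}] has no independent set of size > k *)
Definition inductively_k_independent (k : nat) : Prop :=
  forall (v : T) (A : {set T}),
    A \subset nbhd v :&: [set u | ~~ vlt u v] ->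
    independent A -> (#|A| <= k)%N.

Variable (R : realFieldType) (f : {set T} -> R).

Definition monotone_fn : Prop := forall A B : {set T}, A \subset B -> f A <= f B.
Definition submodular_fn : Prop :=
  forall A B : {set T}, f (A :|: B) + f (A :&: B) <= f A + f B.
Definition nonneg_fn : Prop := forall A : {set T}, 0 <= f A.

Definition marg (S : {set T}) (v : T) : R := f (v |: S) - f S.

Definition nu (S : {set T}) (u : T) : R := marg [set s in S | vlt s u] u.

Variable (beta : R).

(* one iteration; state = (current S, union of all S seen so far) *)
Definition pg_step (st : {set T} * {set T}) (v : T) : {set T} * {set T} :=
  let S := st.1 in
  let C := nbhd v :&: S in
  if (1 + beta) * (\sum_(u in C) nu S u) <= marg S v
  then ((S :\: C) :|: [set v], st.2 :|: [set v])
  else st.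

Definition pg_run : {set T} * {set T} := foldl pg_step (set0, set0) ord.

Definition pg_out : {set T} := pg_run.1.
Definition pg_ever : {set T} := pg_run.2.

End PG.

(* Main.v *)
Require Import Defs.
From mathcomp Require Import all_boot all_order all_algebra.
From mathcomp Require Import lra.
Import Order.TTheory GRing.Theory Num.Theory.
Local Open Scope ring_scope.

Lemma marg_anti {T : finType} {R : realFieldType} {f : {set T} -> R}
  (mono : monotone_fn f) (sub : submodular_fn f) (A B : {set T}) (x : T) :
  A \subset B -> marg f B x <= marg f A x.
Proof.
move=> AB; rewrite /marg.
case xB: (x \in B).
  rewrite (setUidPr _ : x |: B = B); last by rewrite sub1set.
  rewrite subrr subr_ge0; apply: mono; exact: subsetUr.
have := sub (x |: A) B.
have -> : (x |: A) :|: B = x |: B by rewrite -setUA (setUidPr AB).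
have -> : (x |: A) :&: B = A.
  apply/setP => y; rewrite !inE.
  case: (eqVneq y x) => [-> | _] /=; first by rewrite xB; apply/esym/negbTE/negP => /(subsetP AB); rewrite xB.
  by case yA: (y \in A) => //=; rewrite (subsetP AB).
move=> H; lra.
Qed.

Lemma sub_nu {T : finType} (ord : seq T) {R : realFieldType} {f : {set T} -> R}
  (mono : monotone_fn f) (sub : submodular_fn f) (S : {set T}) :
  forall C, f S - f (S :\: C) <= \sum_(u in C) nu ord f S u.
Proof.
move=> C; have [n] := ubnP #|C|; elim: n C => // n IH C.
rewrite ltnS => Hc.
case: (set_0Vmem C) => [-> | [x xC]].
  by rewrite setD0 big_set0 subrr lexx.
case: (arg_minnP (fun u => index u ord) xC) => m mC0 minm.
have mC : m \in C := mC0.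
rewrite (bigD1 m) //=.
have Hc' : (#|C :\ m| < n)%N.
  by move: Hc; rewrite (cardsD1 m C) mC.
have IHC := IH (C :\ m) Hc'.
have -> : \sum_(i in C | i != m) nu ord f S i = \sum_(u in C :\ m) nu ord f S u.
  by apply: eq_bigl => u; rewrite in_setD1 andbC.
suff H2 : f (S :\: (C :\ m)) - f (S :\: C) <= nu ord f S m by lra.
have H3 : f (S :\: (C :\ m)) <= f (m |: (S :\: C)).
  apply: mono; apply/subsetP => y; rewrite !inE.
  by case: (eqVneq y m) => //= _ /andP[-> ->]; rewrite andbT.
have H4 : marg f (S :\: C) m <= nu ord f S m.
  apply: marg_anti => //; apply/subsetP => y; rewrite !inE => /andP[yS ylt].
  rewrite yS andbT; apply/negP => yC.
  by have := minm y yC; rewrite leqNgt; move: ylt; rewrite /vlt => ->.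
rewrite /marg in H4; lra.
Qed.

Theorem lemma14 (T : finType) (e : rel T) (ord : seq T) (k : nat)
  (R : realFieldType) (f : {set T} -> R) (beta : R) :
  simple_graph e -> (1 <= k)%N -> is_ordering ord ->
  inductively_k_independent e ord k ->
  nonneg_fn f -> monotone_fn f -> submodular_fn f -> f set0 = 0 ->
  0 < beta ->
  f (pg_ever e ord f beta) <= (1 + beta^-1) * f (pg_out e ord f beta).
Proof.
move=> _ _ _ _ nn mono sub f0 bpos.
pose P (st : {set T} * {set T}) := (st.1 \subset st.2) /\ beta * f st.2 <= (1 + beta) * f st.1.
have step : forall st v, P st -> P (pg_step e ord f beta st v).
  move=> [S U] v [/= SU HI]; rewrite /pg_step /=.
  set C := nbhd e v :&: S.
  case: ifP => // cond; split => /=.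
    apply/subsetP => y; rewrite !inE => /orP[/andP[_ yS]|->].
      by rewrite (subsetP SU).
    by rewrite orbT.
  have g1 : f (U :|: [set v]) - f U <= marg f S v.
    by rewrite setUC; apply: marg_anti.
  have g2 : marg f S v <= marg f (S :\: C) v by apply: marg_anti => //; exact: subsetDl.
  have r := sub_nu ord mono sub S C.
  rewrite /marg in g1 g2 cond.
  have -> : (S :\: C) :|: [set v] = v |: (S :\: C) by rewrite setUC.
  set a := f (U :|: [set v]) in g1 *.
  set fS' := f (v |: (S :\: C)) in g2 *.
  set g := f (v |: S) - f S in g1 g2 cond.
  set rr := \sum_(u in C) nu ord f S u in r cond.
  have h1 : beta * (a - f U - g) <= 0.
    rewrite mulr_ge0_le0 //; [exact: ltW | lra].
  have h2 : 0 <= (1 + beta) * (fS' - f (S :\: C) - g).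
    rewrite mulr_ge0 //; lra.
  have h3 : 0 <= (1 + beta) * (rr - f S + f (S :\: C)).
    rewrite mulr_ge0 //; lra.
  lra.
have fold_ind : forall s st, P st -> P (foldl (pg_step e ord f beta) st s).
  by elim=> //= a l IHl st Hst; apply: IHl; exact: step.
have : P (pg_run e ord f beta).
  by apply: fold_ind; split; rewrite //= f0 !mulr0.
rewrite /pg_ever /pg_out => -[_ H].
have bne : beta != 0 by rewrite gt_eqF.
have -> : f (pg_run e ord f beta).2 = beta^-1 * (beta * f (pg_run e ord f beta).2).
  by rewrite mulrA mulVf // mul1r.
have -> : (1 + beta^-1) * f (pg_run e ord f beta).1 = beta^-1 * ((1 + beta) * f (pg_run e ord f beta).1).
  by rewrite mulrA mulrDr mulr1 mulVf // addrC.
by rewrite ler_pM2l // invr_gt0.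
Qed.
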